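(* Let $n\geq2$. Every nonzero homogeneous harmonic polynomial $h$ on $\mathbb{R}^{n+1}$ which is $(n+2)$-symmetric and satisfies $\int_{B_1}h(y)\,dy=0$ has degree at least $3$.
   Context: Fix $n+2$ points $q_1,\dots,q_{n+2}\in\mathbb{S}^n\subset\mathbb{R}^{n+1}$ spread evenly on $\mathbb{S}^n$ (vertices of an inscribed regular simplex). $\mathcal{S}_{n+2}(q)$ is the set of rotations $\phi\in SO(n+1)$ mapping $\{q_1,\dots,q_{n+2}\}$ onto itself; $h$ is $(n+2)$-symmetric if $h\circ\phi=h$ for all $\phi\in\mathcal{S}_{n+2}(q)$. $B_1$ is the unit ball of $\mathbb{R}^{n+1}$. *)

(* Defs.v *)
From HB Require Import structures.
From mathcomp Require Import all_boot all_order all_algebra.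
From mathcomp Require Import mpoly.
From mathcomp Require Import all_classical all_reals all_analysis.

Set Implicit Arguments.
Unset Strict Implicit.
Unset Printing Implicit Defensive.

Import Order.TTheory GRing.Theory Num.Theory.
Local Open Scope classical_set_scope.
Local Open Scope ring_scope.

Section Defs.
Variable R : realType.

Definition dotv (k : nat) (u v : 'rV[R]_k) : R := (u *m v^T) 0 0.

(* q_1..q_{n+2} are the vertices of a regular simplex inscribed in S^n
   (unit vectors with pairwise inner product -1/(n+1)). *)
Definition regular_simplex (n : nat) (q : 'I_n.+2 -> 'rV[R]_n.+1) : Prop :=
  forall i j : 'I_n.+2,
    dotv (q i) (q j) = if i == j then 1 else - (n.+1%:R)^-1.

Definition is_rotation (k : nat) (M : 'M[R]_k) : Prop :=
  M *m M^T = 1%:M /\ \det M = 1.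

Definition simplex_sym (n : nat) (q : 'I_n.+2 -> 'rV[R]_n.+1)
  (M : 'M[R]_n.+1) : Prop :=
  is_rotation M /\ (fun x => x *m M) @` range q = range q.

Definition peval (k : nat) (h : mpoly.mpoly k R) (x : 'rV[R]_k) : R :=
  mpoly.meval (fun i => x 0 i) h.

Definition simplex_symmetric (n : nat) (q : 'I_n.+2 -> 'rV[R]_n.+1)
  (h : mpoly.mpoly n.+1 R) : Prop :=
  forall M, simplex_sym q M -> forall x, peval h (x *m M) = peval h x.

Definition harmonic_poly (k : nat) (h : mpoly.mpoly k R) : Prop :=
  \sum_(i < k) mpoly.mderiv i (mpoly.mderiv i h) = 0.

Definition homog_poly (k : nat) (d : nat) (h : mpoly.mpoly k R) : Prop :=
  h \is @mpoly.ishomog1 k R d (mpoly.mpoly_mdeg__canonical__mpoly_Measure k).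

(* Integral over the closed ball {|x|^2 <= rho} of R^k, written as the
   iterated (Fubini) Lebesgue integral:
   int_{|x_1| <= sqrt rho} int_{ball of R^(k-1), radius^2 rho - x_1^2} ... *)
Fixpoint ball_integral (k : nat) (rho : R) (g : seq R -> R) : R :=
  match k with
  | 0 => g [::]
  | k'.+1 =>
      Rintegral (@lebesgue_measure R) `[- Num.sqrt rho, Num.sqrt rho]
        (fun t => ball_integral k' (rho - t ^+ 2) (fun s => g (t :: s)))
  end.

Definition int_unit_ball (k : nat) (h : mpoly.mpoly k R) : R :=
  ball_integral k 1 (fun s => mpoly.meval (fun i : 'I_k => nth 0 s i) h).

End Defs.

(* Main.v *)
Require Import Defs.
From HB Require Import structures.
From mathcomp Require Import all_boot all_order all_algebra.
From mathcomp Require Import mpoly.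
From mathcomp Require Import all_classical all_reals all_analysis.
From mathcomp Require Import fingroup perm.
From mathcomp Require Import measurable_realfun ring lra.
Set Implicit Arguments.
Unset Strict Implicit.
Unset Printing Implicit Defensive.
Import Order.TTheory GRing.Theory Num.Theory.
Import numFieldNormedType.Exports.
Local Open Scope classical_set_scope.
Local Open Scope ring_scope.
Section Ball.
Variable R : realType.
Notation mu := (@lebesgue_measure R).

Definition Vb k (rho : R) := ball_integral k rho (fun _ => 1).

Lemma Vb_S k rho : Vb k.+1 rho =
  Rintegral mu `[- Num.sqrt rho, Num.sqrt rho] (fun t => Vb k (rho - t ^+ 2)).
Proof. by []. Qed.

Lemma itv_meas (s : R) : measurable (`[- s, s] : set R).
Proof. exact: measurable_itv. Qed.

Lemma itv_fin (a b : R) : (mu `[a, b] < +oo)%E.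
Proof.
rewrite lebesgue_measure_itv /=; case: ifP => _ //.
by rewrite -EFinD ltry.
Qed.

Section Step.
Variable V : R -> R.
Hypothesis Vmono : {homo V : x y / x <= y}.
Hypothesis Vge0 : forall x, 0 <= V x.

Lemma step_meas (rho : R) : measurable_fun setT (fun t : R => V (rho - t ^+ 2)).
Proof.
apply: measurableT_comp; first exact: nondecreasing_measurable.
apply: measurable_funB; first exact: measurable_cst.
exact: exprn_measurable.
Qed.

Lemma step_int (rho a b : R) : mu.-integrable `[a, b] (EFin \o (fun t : R => V (rho - t ^+ 2))).
Proof.
apply: measurable_bounded_integrable; first exact: measurable_itv.
- exact: itv_fin.
- exact: measurable_funTS (step_meas rho).
exists (V rho); split; first by rewrite num_real.
move=> M HM x _ /=; rewrite (ger0_norm (Vge0 _)) (le_trans _ (ltW HM)) // Vmono //.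
by rewrite lerBlDr lerDl sqr_ge0.
Qed.
End Step.

Lemma Rint_subset (f : R -> R) (a1 b1 a2 b2 : R) :
  mu.-integrable `[a2, b2] (EFin \o f) -> (forall x, 0 <= f x) ->
  (`[a1, b1] : set R) `<=` `[a2, b2] ->
  Rintegral mu `[a1, b1] f <= Rintegral mu `[a2, b2] f.
Proof.
move=> iB f0 AB; rewrite /Rintegral fine_le //.
- apply: integrable_fin_num; first exact: measurable_itv.
  have := @integrableS _ _ R mu _ _ (EFin \o f) (measurable_itv _) (measurable_itv _) AB iB. exact.
- by apply: integrable_fin_num; first exact: measurable_itv.
apply: ge0_subset_integral => //; try exact: measurable_itv.
- by case/integrableP: iB.
- by move=> x _; rewrite lee_fin f0.
Qed.

Lemma cst_int (c a b : R) : mu.-integrable `[a, b] (EFin \o (fun _ : R => c)).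
Proof.
apply: measurable_bounded_integrable; first exact: measurable_itv.
- exact: itv_fin.
- exact: measurable_cst.
exists `|c|; split; first by rewrite num_real.
by move=> M HM x _ /=; rewrite ltW.
Qed.

Lemma Vb_le0 k x : x <= 0 -> Vb k.+1 x = 0.
Proof.
move=> x0; rewrite Vb_S.
have -> : Num.sqrt x = 0 by apply/eqP; rewrite sqrtr_eq0.
by rewrite oppr0 set_itv1 Rintegral_set1.
Qed.

Lemma Vb_props k :
  [/\ {homo Vb k : x y / x <= y}, (forall x, 0 <= Vb k x),
      (forall x, 0 < x -> 0 < Vb k x) &
      (forall c rho, ball_integral k rho (fun _ => c) = c * Vb k rho)].
Proof.
elim: k => [|k [mono ge0 pos scal]].
  by split => //= *; rewrite mulr1.
have ge0' : forall x, 0 <= Vb k.+1 x.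
  by move=> x; rewrite Vb_S; apply: Rintegral_ge0 => t _; exact: ge0.
split => //.
- move=> a b ab.
  have [a0|a0] := leP a 0; first by rewrite Vb_le0.
  rewrite !Vb_S.
  apply: le_trans (Rint_subset _ _ _) => //.
  + apply: le_Rintegral; [exact: measurable_itv| exact: step_int | exact: step_int|].
    move=> t _ /=; apply: mono; lra.
  + exact: step_int.
  + have sab : Num.sqrt a <= Num.sqrt b by rewrite ler_sqrt //; lra.
    by move=> t /=; rewrite !in_itv /= => /andP[h1 h2]; apply/andP; split; lra.
- move=> x x0; rewrite Vb_S.
  set s := Num.sqrt x.
  have s0 : 0 < s by rewrite sqrtr_gt0.
  have ss : s ^+ 2 = x by rewrite sqr_sqrtr // ltW.
  have v0 : 0 < Vb k (x * 3 / 4) by apply: pos; lra.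
  apply: lt_le_trans (Rint_subset (a1 := - (s / 2)) (b1 := s / 2) _ _ _).
  + apply: (@lt_le_trans _ _ (Rintegral mu `[- (s / 2), s / 2] (fun _ => Vb k (x * 3 / 4)))).
      rewrite Rintegral_cst; [|exact: measurable_itv].
      have := lebesgue_measure_itv `[-(s/2), s/2]%R; rewrite /=.
      have -> : ((- (s/2))%:E < (s/2)%:E)%E by rewrite lte_fin; lra.
      move=> ->; rewrite -EFinD /=; apply: mulr_gt0 => //; lra.
    apply: le_Rintegral; [exact: measurable_itv | exact: cst_int | exact: step_int |].
    move=> t /=; rewrite in_itv /= => /andP[h1 h2]; apply: mono.
    nra.
  + exact: step_int.
  + by move=> t; exact: ge0.
  + by move=> t /=; rewrite !in_itv /= => /andP[h1 h2]; apply/andP; split; lra.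
- move=> c rho /=.
  transitivity (Rintegral mu `[- Num.sqrt rho, Num.sqrt rho] (fun t => c * Vb k (rho - t ^+ 2))).
    by apply: eq_Rintegral => t _; rewrite scal.
  rewrite RintegralZl //; [exact: step_int].
Qed.
End Ball.

Section Poly.
Variable R : realType.
Variable k : nat.
Implicit Types h p : {mpoly R[k]}.

Lemma homog_ind (P : {mpoly R[k]} -> Prop) d h :
  P 0 -> (forall p q, P p -> P q -> P (p + q)) ->
  (forall c p, P p -> P (c *: p)) ->
  (forall m, mdeg m = d -> P 'X_[m]) -> homog_poly d h -> P h.
Proof.
move=> P0 PD PZ PX hd; rewrite (mpolyE h) big_seq.
apply: big_ind => // m mh; apply: PZ; apply: PX.
exact: (dhomog_mf hd mh).
Qed.

Lemma mdeg2P (m : 'X_{1..k}) : mdeg m = 2%N -> exists i j, m = (U_(i) + U_(j))%MM.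
Proof.
move=> m2.
have [i mi] : exists i, (0 < m i)%N.
  apply/existsP; apply: contraT; rewrite negb_exists => /forallP H.
  have : m = 0%MM by apply/mnmP => i; rewrite mnm0E; have := H i; rewrite -leqNgt leqn0 => /eqP.
  by move=> e; move: m2; rewrite e mdeg0.
have le1 : (U_(i) <= m)%MM.
  apply/mnm_lepP => j; rewrite mnm1E; case: eqP => [<-|] //.
have e := submK le1.
have : mdeg (m - U_(i))%MM = 1%N.
  by move: m2; rewrite -{1}e mdegD mdeg1 addn1 => -[].
move/eqP/mdeg1P => [j /eqP ej]; exists j, i.
by rewrite -e ej.
Qed.


Lemma rep0 h : homog_poly 0 h -> exists c, h = c%:MP.
Proof.
move=> hd; apply: (@homog_ind (fun p => exists c, p = c%:MP) 0%N h _ _ _ _ hd).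
- by exists 0; rewrite mpolyC0.
- by move=> p q [c ->] [c' ->]; exists (c + c'); rewrite mpolyCD.
- by move=> a p [c ->]; exists (a * c); rewrite mpolyCM mul_mpolyC.
- move=> m /eqP; rewrite mdeg_eq0 => /eqP ->; exists 1.
  by rewrite mpolyX0.
Qed.

Lemma rep1 h : homog_poly 1 h -> exists c : 'rV[R]_k, h = \sum_i c 0 i *: 'X_i.
Proof.
move=> hd; apply: (@homog_ind (fun p => exists c : 'rV[R]_k, p = \sum_i c 0 i *: 'X_i) 1%N h _ _ _ _ hd).
- by exists 0; rewrite big1 // => i _; rewrite mxE scale0r.
- move=> p q [c ->] [c' ->]; exists (c + c').
  by rewrite -big_split; apply: eq_bigr => i _; rewrite mxE scalerDl.
- move=> a p [c ->]; exists (a *: c).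
  by rewrite scaler_sumr; apply: eq_bigr => i _; rewrite mxE scalerA.
- move=> m /eqP/mdeg1P [i /eqP ->]; exists (\row_j (j == i)%:R).
  rewrite (bigD1 i) //= big1 => [|j ji]; first by rewrite mxE eqxx scale1r addr0.
  by rewrite mxE (negbTE ji) scale0r.
Qed.

Lemma rep2 h : homog_poly 2 h ->
  exists A : 'M[R]_k, h = \sum_i \sum_j A i j *: ('X_i * 'X_j).
Proof.
move=> hd; apply: (@homog_ind (fun p => exists A : 'M[R]_k, p = \sum_i \sum_j A i j *: ('X_i * 'X_j)) 2%N h _ _ _ _ hd).
- by exists 0; rewrite big1 // => i _; rewrite big1 // => j _; rewrite mxE scale0r.
- move=> p q [c ->] [c' ->]; exists (c + c').
  rewrite -big_split; apply: eq_bigr => i _.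
  by rewrite -big_split; apply: eq_bigr => j _; rewrite mxE scalerDl.
- move=> a p [c ->]; exists (a *: c).
  rewrite scaler_sumr; apply: eq_bigr => i _.
  by rewrite scaler_sumr; apply: eq_bigr => j _; rewrite mxE scalerA.
- move=> m /mdeg2P [i [j ->]]; exists (\matrix_(a, b) ((a == i) && (b == j))%:R).
  rewrite (bigD1 i) //= [X in _ + X]big1 => [|a ai]; last first.
    by rewrite big1 // => b _; rewrite mxE (negbTE ai) scale0r.
  rewrite addr0 (bigD1 j) //= [X in _ + X]big1 => [|b bj]; last first.
    by rewrite mxE (negbTE bj) andbF scale0r.
  by rewrite mxE !eqxx scale1r !addr0 mpolyXD.
Qed.

Lemma UU_eq (a b i : 'I_k) : ((U_(a) + U_(b))%MM == (U_(i) + U_(i))%MM) = (a == i) && (b == i).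
Proof.
apply/eqP/andP => [e|[/eqP -> /eqP ->] //].
have := congr1 (fun m : 'X_{1..k} => m i) e; rewrite !mnmDE !mnm1E eqxx.
by case: (a == i); case: (b == i).
Qed.

Lemma rep2_coef (A : 'M[R]_k) i :
  (\sum_a \sum_b A a b *: ('X_a * 'X_b) : {mpoly R[k]})@_(U_(i) + U_(i)) = A i i.
Proof.
rewrite raddf_sum (bigD1 i) //= [X in _ + X]big1 => [|a ai]; last first.
  rewrite raddf_sum big1 // => b _.
  by rewrite /= mcoeffZ -mpolyXD mcoeffX UU_eq (negbTE ai) mulr0.
rewrite addr0 raddf_sum (bigD1 i) //= [X in _ + X]big1 => [|b bi]; last first.
  by rewrite /= mcoeffZ -mpolyXD mcoeffX UU_eq (negbTE bi) andbF mulr0.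
by rewrite /= mcoeffZ -mpolyXD mcoeffX UU_eq eqxx mulr1 addr0.
Qed.

Lemma lap_coef h i : (mpoly.mderiv i (mpoly.mderiv i h))@_0 = h@_(U_(i) + U_(i)) *+ 2.
Proof.
rewrite mcoeff_mderiv mcoeff_mderiv add0m mnm0E mnm1E eqxx /=.
by rewrite -mulrnA.
Qed.

End Poly.

Section Geo.
Variable R : realType.
Variable n : nat.
Variable q : 'I_n.+2 -> 'rV[R]_n.+1.
Hypothesis hq : regular_simplex q.

Definition cn : R := - (n.+1%:R)^-1.

Lemma dotvE (u v : 'rV[R]_n.+1) : dotv u v = \sum_j u 0 j * v 0 j.
Proof. by rewrite /dotv mxE; apply: eq_bigr => j _; rewrite mxE. Qed.

Lemma n1_neq0 : (n.+1%:R : R) != 0.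
Proof. by rewrite pnatr_eq0. Qed.

Lemma sum_gram (i : 'I_n.+2) : \sum_k (if i == k then 1 else cn) = 0.
Proof.
rewrite (bigD1 i) //= eqxx (eq_bigr (fun _ => cn)) => [|k ki]; last first.
  by rewrite eq_sym (negbTE ki).
rewrite sumr_const cardC1 card_ord /= /cn mulNrn -[_ *+ _]mulr_natr mulVf ?n1_neq0 //.
by rewrite subrr.
Qed.

Lemma sum_q0 : \sum_i q i = 0.
Proof.
set s := \sum_i q i.
have H : dotv s s = 0.
  rewrite dotvE.
  transitivity (\sum_i \sum_k dotv (q i) (q k)); last first.
    by rewrite big1 // => i _; under eq_bigr do rewrite hq; exact: sum_gram.
  under eq_bigr do rewrite !summxE mulr_suml.
  rewrite exchange_big /=; apply: eq_bigr => i _.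
  under eq_bigr do rewrite mulr_sumr.
  rewrite exchange_big /=; apply: eq_bigr => k _.
  by rewrite dotvE.
move: H; rewrite dotvE => /eqP; rewrite psumr_eq0 => [/allP H|j _]; last first.
  by rewrite -expr2 sqr_ge0.
apply/rowP => j; rewrite [RHS]mxE.
by move: (H j (mem_index_enum j)) => /=; rewrite mulf_eq0 orbb => /eqP.
Qed.

Definition wid (i : 'I_n.+1) : 'I_n.+2 := widen_ord (leqnSn _) i.

Definition Qf (f : 'I_n.+1 -> 'I_n.+2) : 'M[R]_n.+1 := \matrix_(i, j) q (f i) 0 j.
Definition Qm := Qf wid.
Definition Gm : 'M[R]_n.+1 := \matrix_(i, j) (if i == j then 1 else cn).

Lemma row_Qf f i : row i (Qf f) = q (f i).
Proof. by apply/rowP => j; rewrite !mxE. Qed.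

Lemma gram_Qf f : injective f -> Qf f *m (Qf f)^T = Gm.
Proof.
move=> finj; apply/matrixP => i j; rewrite !mxE.
transitivity (dotv (q (f i)) (q (f j))).
  by rewrite dotvE; apply: eq_bigr => k _; rewrite !mxE.
by rewrite hq (inj_eq finj).
Qed.

Lemma wid_inj : injective wid.
Proof. by move=> i j /(congr1 val) /= /val_inj. Qed.

Lemma Gm_inv : Gm *m (1%:M + const_mx 1) = ((n.+2)%:R / (n.+1)%:R) %:M.
Proof.
apply/matrixP => i k; rewrite !mxE.
under eq_bigr do rewrite !mxE.
rewrite (eq_bigr (fun j => (if i == j then 1 else cn) * (j == k)%:R + (if i == j then 1 else cn))); last first.
  by move=> j _; rewrite mulrDr mulr1 mulr_natr.
rewrite big_split /= (bigD1 k) //= big1 => [|j jk]; last by rewrite (negbTE jk) mulr0.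
rewrite eqxx mulr1 addr0.
rewrite (bigD1 i) //= eqxx (eq_bigr (fun _ => cn)) => [|j ji]; last by rewrite eq_sym (negbTE ji).
rewrite sumr_const cardC1 card_ord /= /cn.
have hn := n1_neq0.
rewrite mulNrn -[_ *+ n]mulr_natr -[_ *+ (i == k)]mulr_natr.
have hc : n.+1%:R^-1 * n.+1%:R = 1 :> R by rewrite mulVf.
have e1 : n.+1%:R = n%:R + 1 :> R by rewrite natr1.
have e2 : n.+2%:R = n%:R + 1 + 1 :> R by rewrite !natr1.
set c := n.+1%:R^-1 in hc *.
rewrite e2; rewrite e1 in hc.
case: eqP => _ /=; nra.
Qed.


Lemma Qm_unit : Qm \in unitmx.
Proof.
have a0 : (n.+2%:R / n.+1%:R : R) != 0 by rewrite mulf_neq0 ?invr_eq0 ?pnatr_eq0.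
have := @mulmx1_unit _ _ Qm (Qm^T *m (1%:M + const_mx 1) *m (n.+2%:R / n.+1%:R)^-1%:M).
case => //.
by rewrite !mulmxA gram_Qf ?Gm_inv; [rewrite -scalar_mxM mulfV | exact: wid_inj].
Qed.

Lemma sum_perm (s : {perm 'I_n.+2}) : \sum_i q (s i) = 0.
Proof. by rewrite -[RHS]sum_q0 [in RHS](reindex_inj (@perm_inj _ s)). Qed.

Lemma q_max : q ord_max = - \sum_(i < n.+1) q (wid i).
Proof. by have := sum_q0; rewrite big_ord_recr /= => /eqP; rewrite addrC addr_eq0 => /eqP. Qed.

Lemma q_max_perm (s : {perm 'I_n.+2}) : q (s ord_max) = - \sum_(i < n.+1) q (s (wid i)).
Proof. by have := sum_perm s; rewrite big_ord_recr /= => /eqP; rewrite addrC addr_eq0 => /eqP. Qed.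

Lemma ord_cases (i : 'I_n.+2) : i = ord_max \/ exists j, i = wid j.
Proof.
have [->|ne] := eqVneq i ord_max; first by left.
right; have lt : (i < n.+1)%N.
  have := ltn_ord i; rewrite ltnS leq_eqVlt => /orP[/eqP e|//].
  by move: ne; rewrite -val_eqE /= e eqxx.
by exists (Ordinal lt); apply: val_inj.
Qed.

Definition Ms (s : {perm 'I_n.+2}) := invmx Qm *m Qf (fun i => s (wid i)).

Lemma Ms_q s i : q i *m Ms s = q (s i).
Proof.
have H j : q (wid j) *m Ms s = q (s (wid j)).
  by rewrite -row_Qf -row_mul /Ms mulmxA mulmxV ?Qm_unit // mul1mx row_Qf.
case: (ord_cases i) => [->|[j ->]] //.
rewrite q_max q_max_perm mulNmx mulmx_suml; congr (- _).
by apply: eq_bigr => j _; rewrite H.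
Qed.

Lemma perm_wid_inj (s : {perm 'I_n.+2}) : injective (fun i => s (wid i)).
Proof. by move=> i j /perm_inj /wid_inj. Qed.

Lemma Ms_orth s : Ms s *m (Ms s)^T = 1%:M.
Proof.
rewrite /Ms trmx_mul mulmxA -(mulmxA (invmx Qm) (Qf _)).
rewrite gram_Qf; last exact: perm_wid_inj.
rewrite -(gram_Qf wid_inj) -/Qm mulmxA mulVmx ?Qm_unit // mul1mx -trmx_mul mulVmx ?Qm_unit //.
exact: trmx1.
Qed.

Lemma fix_one X : (forall i, q i *m X = q i) -> X = 1%:M.
Proof.
move=> H; have QX : Qm *m X = Qm.
  by apply/row_matrixP => i; rewrite row_mul row_Qf H.
by rewrite -(mulKmx Qm_unit X) QX mulVmx ?Qm_unit.
Qed.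

Lemma Ms_det (s : {perm 'I_n.+2}) : (forall i, s (s (s i)) = i) -> \det (Ms s) = 1.
Proof.
move=> s3.
have M3 : Ms s *m Ms s *m Ms s = 1%:M.
  by apply: fix_one => i; rewrite (mulmxA (q i) (Ms s *m Ms s) (Ms s)) (mulmxA (q i) (Ms s) (Ms s)) !Ms_q s3.
have d3 : \det (Ms s) * \det (Ms s) * \det (Ms s) = 1 by rewrite -!det_mulmx M3 det1.
have d2 := congr1 determinant (Ms_orth s); rewrite det_mulmx det_tr det1 in d2.
by rewrite -d3 -mulrA d2 mulr1.
Qed.

Lemma Ms_sym (s : {perm 'I_n.+2}) : (forall i, s (s (s i)) = i) -> simplex_sym q (Ms s).
Proof.
move=> s3; split; first by split; [exact: Ms_orth | exact: Ms_det].
apply/seteqP; split => x /=.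
  by case=> y [i _ <-] <-; exists (s i) => //; rewrite Ms_q.
case=> i _ <-; exists (q ((s^-1)%g i)); first by exists ((s^-1)%g i).
by rewrite Ms_q permKV.
Qed.

End Geo.

Section Cyc.
Variable N : nat.
Implicit Types a b c x : 'I_N.

Definition cyc a b c : {perm 'I_N} := (tperm a b * tperm a c)%g.

Lemma cyc_a a b c : a != b -> a != c -> b != c -> cyc a b c a = b.
Proof. by move=> ab ac bc; rewrite /cyc permM tpermL tpermD // eq_sym. Qed.
Lemma cyc_b a b c : a != b -> a != c -> b != c -> cyc a b c b = c.
Proof. by move=> ab ac bc; rewrite /cyc permM tpermR tpermL. Qed.
Lemma cyc_c a b c : a != b -> a != c -> b != c -> cyc a b c c = a.
Proof. by move=> ab ac bc; rewrite /cyc permM (tpermD ac) ?tpermR // eq_sym. Qed.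
Lemma cyc_x a b c x : x != a -> x != b -> x != c -> cyc a b c x = x.
Proof. by move=> xa xb xc; rewrite /cyc permM !tpermD // eq_sym. Qed.

Lemma cyc3 a b c : a != b -> a != c -> b != c -> forall x, cyc a b c (cyc a b c (cyc a b c x)) = x.
Proof.
move=> ab ac bc x.
have [->|xa] := eqVneq x a; first by rewrite cyc_a // cyc_b // cyc_c.
have [->|xb] := eqVneq x b; first by rewrite cyc_b // cyc_c // cyc_a.
have [->|xc] := eqVneq x c; first by rewrite cyc_c // cyc_a // cyc_b.
by rewrite !cyc_x.
Qed.

Lemma fresh (s : seq 'I_N) : (size s < N)%N -> exists t, t \notin s.
Proof.
move=> hs; case: (pickP [pred t | t \notin s]) => [t ht|H]; first by exists t.
have : (size (enum 'I_N) <= size s)%N.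
  by apply: uniq_leq_size; [exact: enum_uniq | move=> t _; have := H t; rewrite /= => /negbFE].
by rewrite size_enum_ord leqNgt hs.
Qed.
End Cyc.

Section Dot.
Variable R : realType.
Variable k : nat.
Implicit Types x y z : 'rV[R]_k.

Lemma dotE x y : dotv x y = \sum_j x 0 j * y 0 j.
Proof. by rewrite /dotv mxE; apply: eq_bigr => j _; rewrite mxE. Qed.
Lemma dotC x y : dotv x y = dotv y x.
Proof. by rewrite !dotE; apply: eq_bigr => j _; rewrite mulrC. Qed.
Lemma dotDl x y z : dotv (x + y) z = dotv x z + dotv y z.
Proof. by rewrite !dotE -big_split; apply: eq_bigr => j _; rewrite mxE mulrDl. Qed.
Lemma dotDr x y z : dotv z (x + y) = dotv z x + dotv z y.
Proof. by rewrite dotC dotDl !(dotC z). Qed.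
Lemma dot0l x : dotv 0 x = 0.
Proof. by rewrite dotE big1 // => j _; rewrite mxE mul0r. Qed.
Lemma dot_suml (I : finType) (F : I -> 'rV[R]_k) y : dotv (\sum_i F i) y = \sum_i dotv (F i) y.
Proof.
rewrite dotE; under eq_bigr do rewrite summxE mulr_suml.
by rewrite exchange_big; apply: eq_bigr => i _; rewrite dotE.
Qed.
Lemma dot_sumr (I : finType) (F : I -> 'rV[R]_k) y : dotv y (\sum_i F i) = \sum_i dotv y (F i).
Proof. by rewrite dotC dot_suml; apply: eq_bigr => i _; rewrite dotC. Qed.
Lemma dot_tr x y (A : 'M[R]_k) : dotv (x *m A^T) y = dotv (y *m A) x.
Proof.
rewrite !dotE; under eq_bigr do rewrite mxE mulr_suml.
under [RHS]eq_bigr do rewrite mxE mulr_suml.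
rewrite exchange_big; apply: eq_bigr => i _; apply: eq_bigr => j _.
by rewrite mxE; ring.
Qed.
Lemma mul_tr_entry (X Y : 'M[R]_k) i j : (X *m Y^T) i j = dotv (row i X) (row j Y).
Proof. by rewrite mxE dotE; apply: eq_bigr => l _; rewrite !mxE. Qed.
End Dot.

Section Main.
Variable R : realType.
Variable n : nat.
Hypothesis hn : (2 <= n)%N.
Variable q : 'I_n.+2 -> 'rV[R]_n.+1.
Hypothesis hq : regular_simplex q.

Definition inv_fun (F : 'rV[R]_n.+1 -> R) := forall a b c : 'I_n.+2,
  a != b -> a != c -> b != c -> forall x, F (x *m Ms q (cyc a b c)) = F x.

Lemma fresh2 (a b : 'I_n.+2) : exists t, (a != t) && (b != t).
Proof.
have hs : (size [:: a; b] < n.+2)%N by rewrite /= ltnS ltnW.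
have [t ht] := @fresh _ [:: a; b] hs.
by exists t; move: ht; rewrite !inE negb_or !(eq_sym t).
Qed.

Lemma fresh3 (a b c : 'I_n.+2) : exists t, [&& a != t, b != t & c != t].
Proof.
have hs : (size [:: a; b; c] < n.+2)%N by rewrite /= !ltnS.
have [t ht] := @fresh _ [:: a; b; c] hs.
by exists t; move: ht; rewrite !inE !negb_or !(eq_sym t).
Qed.

Lemma deg1 (c : 'rV[R]_n.+1) : inv_fun (fun x => dotv x c) -> c = 0.
Proof.
move=> H; pose f i := dotv (q i) c.
have feq a b : f a = f b.
  have [->//|ab] := eqVneq a b.
  have [t /andP[ha hb]] := fresh2 a b.
  by have := H a b t ab ha hb (q a); rewrite /f Ms_q // cyc_a.
have f0 : f ord0 = 0.
  have : \sum_i f i = 0 by rewrite /f -dot_suml (sum_q0 hq) dot0l.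
  rewrite (eq_bigr (fun _ => f ord0)) => [|i _]; last exact: feq.
  by rewrite sumr_const card_ord -mulr_natr => /eqP; rewrite mulf_eq0 pnatr_eq0 orbF => /eqP.
have Qc : Qm q *m c^T = 0.
  apply/matrixP => i j; rewrite [RHS]mxE mxE (ord1 j).
  under eq_bigr do rewrite !mxE.
  by rewrite -dotE -/(f _) (feq _ ord0) f0.
have : c^T = 0 by rewrite -(mulKmx (Qm_unit hq) c^T) Qc mulmx0.
by move/(congr1 trmx); rewrite trmxK trmx0.
Qed.


Lemma Qcancel (X Y : 'M[R]_n.+1) : Qm q *m X *m (Qm q)^T = Qm q *m Y *m (Qm q)^T -> X = Y.
Proof.
have QU := Qm_unit hq.
have QTU : (Qm q)^T \in unitmx by rewrite unitmx_tr.
move=> e; have e2 : Qm q *m X = Qm q *m Y.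
  by rewrite -(mulmxK QTU (Qm q *m X)) e mulmxK.
by rewrite -(mulKmx QU X) e2 mulKmx.
Qed.

Lemma dotZl (a : R) (x y : 'rV[R]_n.+1) : dotv (a *: x) y = a * dotv x y.
Proof. by rewrite !dotE mulr_sumr; apply: eq_bigr => j _; rewrite mxE mulrA. Qed.

Lemma deg2 (A : 'M[R]_n.+1) : inv_fun (fun x => dotv (x *m A) x) -> \tr A = 0 -> A + A^T = 0.
Proof.
move=> H Htr; set S := A + A^T.
pose B x y := dotv (x *m S) y.
have BE2 x y : B x y = dotv (x *m A) y + dotv (y *m A) x by rewrite /B mulmxDr dotDl dot_tr.
have BE x y : B x y = dotv ((x + y) *m A) (x + y) - dotv (x *m A) x - dotv (y *m A) y.
  by rewrite BE2 mulmxDl !dotDl !dotDr; ring.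
have Bsym x y : B x y = B y x by rewrite !BE2 addrC.
pose g i j := B (q i) (q j).
have ginv a b c i j : a != b -> a != c -> b != c -> g (cyc a b c i) (cyc a b c j) = g i j.
  move=> ab ac bc; rewrite /g -!(Ms_q hq) !BE -mulmxDl.
  by rewrite !(H a b c ab ac bc).
have move1 i i' j : i != j -> i' != j -> g i j = g i' j.
  move=> ij i'j; have [->//|ii'] := eqVneq i i'.
  have [t /and3P[it i't jt]] := fresh3 i i' j.
  rewrite -(ginv i i' t) // cyc_a // cyc_x // eq_sym //.
have move2 i j j' : i != j -> i != j' -> g i j = g i j'.
  by move=> ij ij'; rewrite /g Bsym [RHS]Bsym; apply: move1; rewrite eq_sym.
have gdiag a b : g a a = g b b.
  have [->//|ab] := eqVneq a b.
  have [t /andP[ha hb]] := fresh2 a b.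
  by rewrite -(ginv a b t) // cyc_a.
have o01 : (ord0 : 'I_n.+2) != ord_max by rewrite -val_eqE.
have goff i j : i != j -> g i j = g ord0 ord_max.
  move=> ij; have [io1|io1] := eqVneq i ord_max.
    rewrite io1 in ij *; rewrite (move2 ord_max j ord0) //.
    by rewrite /g Bsym.
  by rewrite (move2 i j ord_max) // (move1 i ord0 ord_max).
set al := g ord0 ord0.
have gsum : \sum_j g ord0 j = 0.
  by rewrite /g /B -dot_sumr (sum_q0 hq) dotC dot0l.
have bet : g ord0 ord_max = al * cn R n.
  move: gsum; rewrite (bigD1 ord0) //= (eq_bigr (fun _ => g ord0 ord_max)) => [|j j0]; last first.
    by apply: goff; rewrite eq_sym.
  rewrite sumr_const cardC1 card_ord /= -/al => e.
  have hn1 := n1_neq0 R n.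
  rewrite -[_ *+ _]mulr_natr in e.
  apply: (mulIf hn1); rewrite /cn mulrN mulNr -mulrA mulVf // mulr1.
  lra.
have gall i j : g i j = al * (if i == j then 1 else cn R n).
  case: eqP => [->|/eqP ij]; first by rewrite mulr1 /al (gdiag j ord0).
  by rewrite goff.
have SE : S = al%:M.
  apply: Qcancel; apply/matrixP => i j.
  rewrite !mul_tr_entry !row_mul !row_Qf mul_mx_scalar dotZl.
  by rewrite -/(B _ _) -/(g _ _) gall hq (inj_eq (@wid_inj n)).
have al0 : al = 0.
  have : \tr S = 0 by rewrite mxtraceD mxtrace_tr Htr addr0.
  by rewrite SE mxtrace_scalar => /eqP; rewrite mulrn_eq0 /= => /eqP.
by rewrite -/S SE al0 raddf0.
Qed.

End Main.

Lemma peval1 (R : realType) k (c : 'rV[R]_k) x :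
  peval (\sum_i c 0 i *: 'X_i) x = dotv x c.
Proof.
rewrite /peval raddf_sum dotE; apply: eq_bigr => i _.
by rewrite /= mevalZ mevalXU mulrC.
Qed.

Lemma peval2 (R : realType) k (A : 'M[R]_k) x :
  peval (\sum_i \sum_j A i j *: ('X_i * 'X_j)) x = dotv (x *m A) x.
Proof.
rewrite /peval raddf_sum dotE.
under [RHS]eq_bigr do rewrite mxE mulr_suml.
rewrite [RHS]exchange_big; apply: eq_bigr => i _ /=.
rewrite raddf_sum; apply: eq_bigr => j _.
by rewrite /= mevalZ mevalM !mevalXU; ring.
Qed.

Unset Implicit Arguments.
Close Scope classical_set_scope.

Theorem lemma8p2 (R : realType) (n : nat) (hn : (2 <= n)%N)
  (q : 'I_n.+2 -> 'rV[R]_n.+1) (hq : regular_simplex q)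
  (h : mpoly.mpoly n.+1 R) (d : nat) :
  h != 0 ->
  homog_poly d h ->
  harmonic_poly h ->
  simplex_symmetric q h ->
  int_unit_ball h = 0 ->
  (3 <= d)%N.
Proof.
move=> hnz hd hh hs hi.
have Hinv F : (forall x M, simplex_sym q M -> F (x *m M) = F x) -> inv_fun q F.
  move=> HF a b c ab ac bc x; apply: HF; apply: (Ms_sym hq); exact: cyc3.
rewrite leqNgt; apply/negP => d3.
case: d hd d3 => [|[|[|d]]] hd d3 //.
- have [c hc] := rep0 hd.
  have c0 : c != 0 by move: hnz; rewrite hc mpolyC_eq0.
  move: hi; rewrite /int_unit_ball hc.
  rewrite (_ : (fun s => _) = fun _ => c); last first.
    by apply: funext => s; exact: mevalC.
  case: (Vb_props R n.+1) => _ _ pos ->.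
  apply/eqP; rewrite mulf_neq0 //; apply: lt0r_neq0; exact: pos.
- have [c hc] := rep1 hd.
  have : c = 0.
    apply: (deg1 hn hq); apply: Hinv => x M HM.
    by rewrite -!(peval1 c) -hc; exact: hs.
  move=> c0; move: hnz; rewrite hc c0.
  by rewrite big1 ?eqxx // => i _; rewrite mxE scale0r.
- have [A hA] := rep2 hd.
  have htr : \tr A = 0.
    have := congr1 (mpoly.mcoeff 0%MM) hh.
    rewrite raddf_sum /= mcoeff0.
    move=> e; have : \sum_(i < n.+1) A i i *+ 2 = 0.
      by rewrite -[RHS]e; apply: eq_bigr => i _; rewrite lap_coef hA rep2_coef.
    by rewrite sumrMnl => /eqP; rewrite mulrn_eq0 /= => /eqP.
  have AA : A + A^T = 0.
    apply: (deg2 hn hq); last exact: htr.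
    apply: Hinv => x M HM.
    by rewrite -!(peval2 A) -hA; exact: hs.
  move: hnz; set P := \sum_i \sum_j A i j *: ('X_i * 'X_j) in hA.
  have PN : P = - P.
    rewrite {1}/P exchange_big /= -sumrN; apply: eq_bigr => i _.
    rewrite -sumrN; apply: eq_bigr => j _.
    have := congr1 (fun M : 'M[R]_n.+1 => M i j) AA; rewrite !mxE => /eqP.
    rewrite addrC addr_eq0 => /eqP ->; by rewrite scaleNr mulrC.
  have P0 : P = 0.
    have : (2%:R : R) *: P = 0 by rewrite scaler_nat mulr2n {2}PN subrr.
    by move/eqP; rewrite scaler_eq0 pnatr_eq0 /= => /eqP.
  by rewrite hA P0 eqxx.
Qed.
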